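(* Suppose that for every connected graph $G$, the number of pairwise non-isomorphic connected graphs equimorphic to $G$ is either $1$ or infinite. Then for every graph $G$, the number of pairwise non-isomorphic graphs equimorphic to $G$ is either $1$ or infinite.
   Context: Graphs are undirected and loopless. $G$ embeds into $G'$ if $G$ is isomorphic to an induced subgraph of $G'$; $G,G'$ are equimorphic if each embeds into the other. *)

(* Defs.v *)
From Stdlib Require Import List Relation_Operators.

Record Graph : Type := mkGraph {
  V : Type;
  adj : V -> V -> Prop;
  adj_sym : forall x y, adj x y -> adj y x;
  adj_irrefl : forall x, ~ adj x x
}.

(* G embeds into G': G is isomorphic to an induced subgraph of G', i.e. there
   is an injective map preserving and reflecting adjacency. *)
Definition embeds (G G' : Graph) : Prop :=
  exists f : V G -> V G',
    (forall x y, f x = f y -> x = y) /\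
    (forall x y, adj G x y <-> adj G' (f x) (f y)).

Definition equimorphic (G G' : Graph) : Prop := embeds G G' /\ embeds G' G.

Definition isomorphic (G G' : Graph) : Prop :=
  exists (f : V G -> V G') (g : V G' -> V G),
    (forall x, g (f x) = x) /\ (forall y, f (g y) = y) /\
    (forall x y, adj G x y <-> adj G' (f x) (f y)).

Definition connected (G : Graph) : Prop :=
  inhabited (V G) /\ forall x y, clos_refl_trans (V G) (adj G) x y.

Definition one_equimorphism_class (G : Graph) : Prop :=
  forall H, equimorphic H G -> isomorphic H G.

(* The number of isomorphism classes of graphs equimorphic to G is infinite:
   no finite list of graphs represents all of them up to isomorphism. *)
Definition infinitely_many_equimorphism_classes (G : Graph) : Prop :=
  ~ exists l : list Graph,
      forall H, equimorphic H G -> exists H', In H' l /\ isomorphic H H'.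

Definition one_connected_equimorphism_class (G : Graph) : Prop :=
  forall H, connected H -> equimorphic H G -> isomorphic H G.

Definition infinitely_many_connected_equimorphism_classes (G : Graph) : Prop :=
  ~ exists l : list Graph,
      forall H, connected H -> equimorphic H G ->
        exists H', In H' l /\ isomorphic H H'.

(* Main.v *)
Require Import Defs.
From Stdlib Require Import List Relation_Operators.
From Stdlib Require Import Classical.

Definition co (G : Graph) : Graph.
Proof.
  refine (mkGraph (V G) (fun x y => x <> y /\ ~ adj G x y) _ _).
  - intros x y [H1 H2]; split; [congruence| intro H; apply H2, adj_sym, H].
  - intros x [H _]; apply H; reflexivity.
Defined.

Definition addiso (G : Graph) : Graph.
Proof.
  refine (mkGraph (option (V G))
    (fun u v => match u, v with Some a, Some b => adj G a b | _, _ => False end) _ _).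
  - intros [a|] [b|]; simpl; auto using adj_sym.
  - intros [a|]; simpl; auto using adj_irrefl.
Defined.

Definition covers (G : Graph) (l : list Graph) : Prop :=
  forall H, equimorphic H G -> exists H', In H' l /\ isomorphic H H'.

Lemma embeds_refl G : embeds G G.
Proof. exists (fun x => x); split; auto; tauto. Qed.

Lemma embeds_trans A B C : embeds A B -> embeds B C -> embeds A C.
Proof.
  intros [f [fi fa]] [g [gi ga]]. exists (fun x => g (f x)); split; auto.
  intros x y. rewrite fa. apply ga.
Qed.

Lemma equi_trans A B C : equimorphic A B -> equimorphic B C -> equimorphic A C.
Proof. intros [] []; split; eapply embeds_trans; eauto. Qed.

Lemma embeds_co A B : embeds A B -> embeds (co A) (co B).
Proof.
  intros [f [fi fa]]. exists f; split; auto. intros x y; simpl.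
  rewrite (fa x y). split; intros [h1 h2]; split; auto; congruence.
Qed.

Lemma embeds_co_swap1 A B : embeds A (co B) -> embeds (co A) B.
Proof.
  intros [f [fi fa]]. exists f; split; auto. intros x y; simpl.
  rewrite (fa x y); simpl. split.
  - intros [h1 h2]. apply NNPP. intro hn. apply h2. split; [intro e; apply h1, fi, e | exact hn].
  - intros h. split.
    + intro e; subst. apply (adj_irrefl B _ h).
    + intros [_ h2]; auto.
Qed.

Lemma embeds_co_swap2 A B : embeds (co A) B -> embeds A (co B).
Proof.
  intros [f [fi fa]]. exists f; split; auto. intros x y; simpl.
  rewrite <- (fa x y); simpl. split.
  - intros h. split.
    + intro e. apply fi in e; subst. apply (adj_irrefl A _ h).
    + intros [_ h2]; auto.
  - intros [h1 h2]. apply NNPP. intro hn. apply h2. split; auto. congruence.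
Qed.

Lemma iso_co_swap A B : isomorphic (co A) B -> isomorphic A (co B).
Proof.
  intros [f [g [fg [gf fa]]]]. exists f, g; split; [|split]; auto.
  intros x y; simpl. rewrite <- (fa x y); simpl. split.
  - intros h. split.
    + intro e. assert (x = y) by (rewrite <- (fg x), <- (fg y), e; auto). subst.
      apply (adj_irrefl A _ h).
    + intros [_ h2]; auto.
  - intros [h1 h2]. apply NNPP. intro hn. apply h2. split; auto. congruence.
Qed.

Lemma iso_co_rev A B : isomorphic (co A) (co B) -> isomorphic A B.
Proof.
  intros [f [g [fg [gf fa]]]]. exists f, g; split; [|split]; auto.
  intros x y. specialize (fa x y); simpl in fa.
  destruct (classic (x = y)) as [e|ne].
  - subst. split; intro h; exfalso; eapply adj_irrefl; eauto.
  - assert (f x <> f y) by (intro e; apply ne; rewrite <- (fg x), <- (fg y), e; auto).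
    split; intro h.
    + apply NNPP; intro hn. destruct (proj2 fa (conj H hn)); auto.
    + apply NNPP; intro hn. destruct (proj1 fa (conj ne hn)); auto.
Qed.

Lemma covers_equi A G l : equimorphic A G -> covers G l -> covers A l.
Proof. intros e c H eH. apply c. eapply equi_trans; eauto. Qed.

Lemma covers_co G l : covers G l -> covers (co G) (map co l).
Proof.
  intros c X [e1 e2].
  destruct (c (co X)) as [H' [i h]].
  - split; [apply embeds_co_swap1; auto | apply embeds_co_swap2 in e2; auto].
  - exists (co H'); split; [apply in_map; auto | apply iso_co_swap; auto].
Qed.

Lemma crt_sym T (R : T -> T -> Prop) : (forall x y, R x y -> R y x) ->
  forall x y, clos_refl_trans T R x y -> clos_refl_trans T R y x.
Proof.
  intros s x y h; induction h; eauto using rt_step, rt_refl, rt_trans.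
Qed.

Lemma crt_neigh T (R : T -> T -> Prop) a b :
  clos_refl_trans T R a b -> a <> b -> exists c, R a c.
Proof.
  induction 1; intros ne; eauto.
  - congruence.
  - destruct (classic (x = y)); subst; auto.
Qed.

Lemma crt_map A B (f : V A -> V B) :
  (forall x y, adj A x y -> adj B (f x) (f y)) ->
  forall x y, clos_refl_trans _ (adj A) x y -> clos_refl_trans _ (adj B) (f x) (f y).
Proof. intros h x y c; induction c; eauto using rt_step, rt_refl, rt_trans. Qed.

Lemma embeds_addiso_mono A B : embeds A B -> embeds (addiso A) (addiso B).
Proof.
  intros [f [fi fa]]. exists (option_map f); split.
  - intros [a|] [b|]; simpl; intro e; inversion e; auto. f_equal; auto.
  - intros [a|] [b|]; simpl; auto; tauto.
Qed.

Lemma embeds_addiso_r A : embeds A (addiso A).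
Proof. exists (@Some _); split; [intros; congruence | simpl; tauto]. Qed.

Lemma co_addiso_connected A : connected (co (addiso A)).
Proof.
  split; [exact (inhabits None)|].
  assert (hn : forall u, clos_refl_trans _ (adj (co (addiso A))) None u).
  { intros [a|]; [apply rt_step; simpl; split; [congruence|auto] | apply rt_refl]. }
  intros x y. eapply rt_trans; [apply crt_sym; [apply adj_sym | apply hn] | apply hn].
Qed.

Lemma core (Hyp : forall G : Graph, connected G ->
     one_connected_equimorphism_class G \/
     infinitely_many_connected_equimorphism_classes G)
  G l : connected G -> covers G l -> one_equimorphism_class G.
Proof.
  intros cG cov.
  assert (oneG : one_connected_equimorphism_class G).
  { destruct (Hyp G cG) as [h|h]; auto. exfalso; apply h. exists l.
    intros H _ e; apply cov; auto. }
  intros K eK.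
  destruct (classic (connected K)) as [cK|nK]; [apply oneG; auto|exfalso].
  destruct eK as [[e [ei ea]] [f [fi fa]]].
  destruct cG as [[g0] cG].
  assert (fcr : forall g, clos_refl_trans _ (adj K) (f g0) (f g)).
  { intro g. apply crt_map; [intros; apply fa; auto | apply cG]. }
  assert (exists x y, ~ clos_refl_trans _ (adj K) x y) as [x [y nxy]].
  { apply NNPP; intro hn. apply nK. split; [exact (inhabits (f g0))|].
    intros x y. apply NNPP; intro h. apply hn; eauto. }
  assert (exists z, ~ clos_refl_trans _ (adj K) (f g0) z) as [z nz].
  { destruct (classic (clos_refl_trans _ (adj K) (f g0) x)) as [h|h]; eauto.
    exists y; intro h'. apply nxy. eapply rt_trans; [|exact h'].
    apply crt_sym; auto using adj_sym. }
  assert (noiso : forall g, exists c, adj G g c).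
  { assert (x <> y) by (intro; subst; apply nxy, rt_refl).
    intro g. destruct (classic (g = e x)) as [hx|hx].
    - apply (crt_neigh _ _ g (e y)); auto. subst g; intro h; apply ei in h; auto.
    - apply (crt_neigh _ _ g (e x)); auto. }
  set (A1 := addiso G). set (A2 := addiso A1).
  assert (e1K : embeds A1 K).
  { exists (fun u => match u with Some g => f g | None => z end). split.
    - intros [a|] [b|]; intro h; auto.
      + f_equal; auto.
      + exfalso; apply nz; rewrite <- h; auto.
      + exfalso; apply nz; rewrite h; auto.
    - intros [a|] [b|]; simpl; auto; split; try tauto; intro h; apply nz.
      + eapply rt_trans; [apply (fcr a)| apply rt_step; auto].
      + eapply rt_trans; [apply (fcr b)| apply rt_step; apply adj_sym; auto].
      + exfalso; eapply adj_irrefl; eauto. }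
  assert (eq1 : equimorphic A1 G).
  { split; [eapply embeds_trans; eauto; exists e; auto | apply embeds_addiso_r]. }
  assert (eq2 : equimorphic A2 A1).
  { split; [apply embeds_addiso_mono, eq1 | apply embeds_addiso_r]. }
  assert (cov1 := covers_co _ _ (covers_equi _ _ _ eq1 cov)).
  assert (iso21 : isomorphic A2 A1).
  { apply iso_co_rev.
    destruct (Hyp (co A1) (co_addiso_connected _)) as [h|h].
    - apply h; [apply co_addiso_connected|].
      destruct eq2; split; apply embeds_co; auto.
    - exfalso; apply h. eexists; intros H _ eH; apply cov1; auto. }
  destruct iso21 as [p [q [pq [qp pa]]]].
  assert (isol : forall a : V A2, (forall w, ~ adj A2 a w) -> p a = None).
  { intros a ha. destruct (p a) as [g|] eqn:E; auto. exfalso.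
    destruct (noiso g) as [c hc]. apply (ha (q (Some c))).
    apply pa. rewrite E, qp. exact hc. }
  assert (h1 := isol None (fun w h => h)).
  assert (h2 := isol (Some None) (fun w => match w with Some w => fun h => h | None => fun h => h end)).
  rewrite <- h2 in h1. apply (f_equal q) in h1. rewrite !pq in h1. discriminate.
Qed.

Theorem proposition1p5 :
  (forall G : Graph, connected G ->
     one_connected_equimorphism_class G \/
     infinitely_many_connected_equimorphism_classes G) ->
  forall G : Graph,
    one_equimorphism_class G \/ infinitely_many_equimorphism_classes G.
Proof.
  intros Hyp G.
  destruct (classic (exists l, covers G l)) as [[l cov]|nc];
    [left | right; intros [l c]; apply nc; exists l; exact c].
  destruct (classic (connected G)) as [cG|nG]; [eapply core; eauto|].
  destruct (classic (inhabited (V G))) as [[g0]|ne].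
  - assert (exists x y, ~ clos_refl_trans _ (adj G) x y) as [x [y nxy]].
    { apply NNPP; intro hn. apply nG. split; [exact (inhabits g0)|].
      intros x y. apply NNPP; intro h. apply hn; eauto. }
    assert (cco : connected (co G)).
    { split; [exact (inhabits g0)|]. intros u v.
      assert (direct : forall a b, ~ clos_refl_trans _ (adj G) a b ->
                 clos_refl_trans _ (adj (co G)) a b).
      { intros a b h. apply rt_step. simpl. split.
        - intro; subst; apply h, rt_refl.
        - intro; apply h, rt_step; auto. }
      assert (exists w, ~ clos_refl_trans _ (adj G) u w) as [w nw].
      { destruct (classic (clos_refl_trans _ (adj G) u x)) as [h|h]; eauto.
        exists y; intro h'. apply nxy. eapply rt_trans; [|exact h'].
        apply crt_sym; auto using adj_sym. }
      destruct (classic (clos_refl_trans _ (adj G) u v)) as [h|h]; [|auto].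
      apply rt_trans with w; auto.
      apply crt_sym; [apply adj_sym|]. apply direct.
      intro h'. apply nw. eapply rt_trans; eauto. }
    assert (one := core Hyp (co G) _ cco (covers_co _ _ cov)).
    intros H [e1 e2]. apply iso_co_rev, one. split; apply embeds_co; auto.
  - intros H [[f _] _]. exists f, (fun y => False_rect _ (ne (inhabits y))).
    split; [intro x; destruct (ne (inhabits (f x)))|split].
    + intro y; destruct (ne (inhabits y)).
    + intro x; destruct (ne (inhabits (f x))).
Qed.
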